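(* Let $n$ be a positive integer and let $G$ be a finite simple graph which is gap-free and $n$-claw-free. Then $\operatorname{reg}(I(G))\leq n$. *)

(* Defs.v *)
From HB Require Import structures.
From mathcomp Require Import all_boot all_order all_algebra.
Set Implicit Arguments. Unset Strict Implicit. Unset Printing Implicit Defensive.
Import Order.TTheory GRing.Theory Num.Theory.
Local Open Scope ring_scope.

(* A finite simple graph on the finite vertex type V is a symmetric,
   irreflexive relation e : rel V.  The polynomial ring is
   S = k[x_v : v in V] and I(G) = (x_a x_b : e a b) is the edge ideal. *)

Section EdgeIdeal.
Variables (k : fieldType) (V : finType) (e : rel V).

Definition gap_free : Prop :=
  forall a b c d : V, e a b -> e c d ->
    a != c -> a != d -> b != c -> b != d ->
    [|| e a c, e a d, e b c | e b d].

Definition claw_free (n : nat) : Prop :=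
  ~ exists (v : V) (W : {set V}),
      [/\ #|W| = n, {in W, forall w, e v w} &
          {in W &, forall w w', ~~ e w w'}].

(* Monomials of S with exponents bounded by j (enough for degree <= j). *)
Definition mdeg (j : nat) (u : {ffun V -> 'I_j.+1}) : nat := (\sum_v (u v : nat))%N.

(* u is a standard monomial for I(G), i.e. u \notin I(G). *)
Definition std_mon (j : nat) (u : {ffun V -> 'I_j.+1}) : bool :=
  [forall a, forall b, ~~ [&& e a b, (0 < u a)%N & (0 < u b)%N]].

(* The degree-j strand of the Koszul complex K(x_v : v in V) (x) S/I(G):
   its i-th group (K_i (x) S/I)_j has basis the pairs (F, u) with F a set
   of i variables (wedge e_F) and u a standard monomial of degree j - i. *)
Definition kbasis (j i : nat) (p : {set V} * {ffun V -> 'I_j.+1}) : bool :=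
  [&& #|p.1| == i, (#|p.1| + mdeg p.2 == j)%N & std_mon p.2].

(* Koszul differential d(u e_F) = sum_{l in F} (-1)^{pos(l,F)} x_l u e_{F\l},
   the term vanishing in S/I when x_l u lies in I(G).
   kcoef j i p q = coefficient of basis element q in d(p), for p in degree i. *)
Definition kcoef (j i : nat) (p q : {set V} * {ffun V -> 'I_j.+1}) : k :=
  if @kbasis j i p && std_mon q.2 then
    match [pick l in p.1 | (q.1 == p.1 :\ l)
             && ((q.2 l : nat) == (p.2 l).+1)
             && [forall v, (v != l) ==> ((q.2 v : nat) == p.2 v)]] with
    | Some l => (-1) ^+ #|[set v in p.1 | (enum_rank v < enum_rank l)%N]|
    | None => 0
    end
  else 0.

(* Matrix of d_i (rows = sources, zero rows outside the degree-i basis). *)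
Definition kmx (j i : nat) :
  'M[k]_(#|{: {set V} * {ffun V -> 'I_j.+1}}|) :=
  \matrix_(r, c) @kcoef j i (enum_val r) (enum_val c).

(* graded Betti number beta_{i,j}(S/I(G)) = dim_k Tor_i^S(S/I(G), k)_j,
   computed as dim H_i of the degree-j strand of K(x) (x) S/I(G). *)
Definition betti_quot (i j : nat) : nat :=
  (#|[pred p | @kbasis j i p]| - \rank (kmx j i) - \rank (kmx j i.+1))%N.

(* reg(I(G)) = max { j - i : beta_{i,j}(I(G)) <> 0 }, and
   beta_{i,j}(I) = beta_{i+1,j}(S/I).  Hence reg(I(G)) <= n iff
   for all i >= 1, beta_{i,j}(S/I) <> 0 implies j - (i - 1) <= n. *)
Definition reg_edge_ideal_le (n : nat) : Prop :=
  forall i j : nat, (0 < i)%N -> betti_quot i j <> 0%N -> (j + 1 <= n + i)%N.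

End EdgeIdeal.

(* Main.v *)
Require Import Defs.
From HB Require Import structures.
From mathcomp Require Import all_boot all_order all_algebra.
From mathcomp Require Import zify ring.
Set Implicit Arguments. Unset Strict Implicit. Unset Printing Implicit Defensive.
Import Order.TTheory GRing.Theory Num.Theory.

Section Comb.
Variables (k : fieldType) (V : finType) (e : rel V).
Hypotheses (eS : symmetric e) (eirr : irreflexive e).
Local Open Scope ring_scope.
Implicit Types (S R F G A B X D : {set V}) (l m : V) (t : nat).

Definition indep (X : {set V}) := [forall x in X, forall y in X, ~~ e x y].

Lemma indepP (X : {set V}) : reflect (forall x y, x \in X -> y \in X -> ~~ e x y) (indep X).
Proof.
apply: (iffP forall_inP) => [H x y xX yX | H x xX].
  by move/forall_inP: (H x xX); apply.
by apply/forall_inP => y yX; apply: H.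
Qed.

Lemma indepS (A B : {set V}) : A \subset B -> indep B -> indep A.
Proof.
move=> /subsetP sAB /indepP H; apply/indepP => x y xA yA; apply: H; exact: sAB.
Qed.

Definition valid (S R F : {set V}) := (F \subset S) && indep ((S :\: F) :|: R).
Definition dd S R (s : V -> {set V} -> k) (z : {set V} -> k) (G : {set V}) : k :=
  if valid S R G then \sum_(l in S :\: G) s l (l |: G) * z (l |: G) else 0.
Definition sgsq (s : V -> {set V} -> k) := forall l F, s l F * s l F = 1.
Definition anti S (s : V -> {set V} -> k) := forall l m F, F \subset S ->
  l \in F -> m \in F -> l != m ->
  s l F * s m (F :\ l) = - (s m F * s l (F :\ m)).
Definition homz S R t (z : {set V} -> k) :=
  forall F, z F != 0 -> valid S R F /\ #|S :\: F| = t.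
Definition exact S R s t := forall z, homz S R t z -> (forall G, dd S R s z G = 0) ->
  exists y : {set V} -> k, (forall F, y F != 0 -> F \subset S /\ (#|S :\: F|).+1 = t)
     /\ (forall G, dd S R s y G = z G).

Lemma valid_up S R G l : valid S R G -> l \in S -> valid S R (l |: G).
Proof.
case/andP=> GS iG lS; apply/andP; split.
  by rewrite subUset sub1set lS.
apply: indepS iG; apply/subsetP => x; rewrite !inE.
by case: (x \in R); rewrite ?orbT // !orbF => /andP[/norP[_ ->] ->].
Qed.

Lemma homz0 S R t z F : homz S R t z -> ~~ valid S R F -> z F = 0.
Proof. by move=> H vF; apply/eqP; apply: contraNT vF => /H []. Qed.

Lemma sum_nz (D : {set V}) (f : V -> k) :
  \sum_(l in D) f l != 0 -> exists2 l, l \in D & f l != 0.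
Proof.
move=> H; apply/exists_inP; apply: contraNT H; rewrite negb_exists_in => /forall_inP H.
by rewrite big1 // => l /H /negPn /eqP.
Qed.

Lemma ddD S R s y1 y2 G :
  dd S R s (fun F => y1 F + y2 F) G = dd S R s y1 G + dd S R s y2 G.
Proof.
rewrite /dd; case: ifP => _; last by rewrite addr0.
by rewrite -big_split /=; apply: eq_bigr => l _; rewrite mulrDr.
Qed.

Lemma ddB S R s y1 y2 G :
  dd S R s (fun F => y1 F - y2 F) G = dd S R s y1 G - dd S R s y2 G.
Proof.
rewrite /dd; case: ifP => _; last by rewrite subr0.
by rewrite -sumrB /=; apply: eq_bigr => l _; rewrite mulrBr.
Qed.

Lemma dd0 S R s G : dd S R s (fun _ => 0) G = 0.
Proof. by rewrite /dd; case: ifP => // _; rewrite big1 // => l _; rewrite mulr0. Qed.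

Lemma antisym_sum (D : {set V}) (T : V -> V -> k) :
  (forall l, T l l = 0) -> (forall l m, l \in D -> m \in D -> T l m = - T m l) ->
  \sum_(l in D) \sum_(m in D) T l m = 0.
Proof.
move=> T0 Ta.
have E : forall l m, T l m =
   (if (enum_rank l < enum_rank m)%N then T l m else 0)
 + (if (enum_rank m < enum_rank l)%N then T l m else 0).
  move=> l m; case: (ltngtP (enum_rank l) (enum_rank m)) => H; rewrite ?addr0 ?add0r //.
  by move/val_inj/enum_rank_inj: H => ->; rewrite T0.
rewrite (eq_bigr (fun l => \sum_(m in D) (if (enum_rank l < enum_rank m)%N then T l m else 0)
   + \sum_(m in D) (if (enum_rank m < enum_rank l)%N then T l m else 0))); last first.
  by move=> l _; rewrite -big_split /=; apply: eq_bigr => m _; exact: E.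
rewrite big_split /= [X in _ + X]exchange_big /= -big_split /= big1 // => l lD.
rewrite -big_split /= big1 // => m mD.
by case: ifP => _; rewrite ?addr0 // (Ta m l) // subrr.
Qed.

Lemma dd2 S R s y G : anti S s -> dd S R s (dd S R s y) G = 0.
Proof.
move=> As; rewrite {1}/dd; case: ifP => vG //.
have GS : G \subset S by case/andP: vG.
transitivity (\sum_(l in S :\: G) \sum_(m in S :\: G)
   (if l == m then 0 else s l (l |: G) * (s m (m |: (l |: G)) * y (m |: (l |: G))))).
  apply: eq_bigr => l; rewrite inE => /andP[lG lS].
  rewrite /dd valid_up // mulr_sumr.
  rewrite [in RHS](bigD1 l) /=; last by rewrite inE lG lS.
  rewrite eqxx add0r; apply: eq_big => m.
    by rewrite !inE; case: (m == l); case: (m \in G); case: (m \in S).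
  by rewrite !inE => /andP[/norP[H _] _]; rewrite eq_sym (negbTE H).
apply: antisym_sum => [l|l m]; first by rewrite eqxx.
rewrite !inE => /andP[lG lS] /andP[mG mS].
rewrite [m == l]eq_sym; case: eqP => [//|/eqP lm]; first by rewrite oppr0.
set F := m |: (l |: G).
have FS : F \subset S by rewrite !subUset !sub1set lS mS GS.
have E1 : l |: (m |: G) = F by rewrite /F setUCA.
have E2 : F :\ m = l |: G by rewrite /F setU1K // !inE negb_or mG eq_sym lm.
have E3 : F :\ l = m |: G by rewrite -E1 setU1K // !inE negb_or lG lm.
have := As l m F FS; rewrite !inE !eqxx !orbT /= => /(_ isT isT lm).
rewrite E2 E3 E1 => H.
rewrite !mulrA [s m (m |: G) * s l F]mulrC H.
by rewrite mulNr opprK [s l (l |: G) * s m F]mulrC.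
Qed.


Lemma indepU1 X w : indep X -> (forall x, x \in X -> ~~ e w x) -> indep (w |: X).
Proof.
move=> /indepP iX H; apply/indepP => x y; rewrite !inE.
case/predU1P=> [->|xX]; case/predU1P=> [->|yX].
- by rewrite eirr.
- exact: H.
- by rewrite eS; exact: H.
- exact: iX.
Qed.

Lemma setDD1 S G w : w \in S -> S :\: (G :\ w) = w |: (S :\: G).
Proof.
by move=> wS; apply/setP=> x; rewrite !inE; case: eqP => // ->; rewrite wS.
Qed.

Lemma setU1D1 G l w : l != w -> (l |: G) :\ w = l |: (G :\ w).
Proof.
move=> lw; apply/setP=> x; rewrite !inE.
by case: (x =P w) => [->|_] /=; [rewrite eq_sym (negbTE lw) | case: (x == l)].
Qed.

Lemma cone S R s t w : sgsq s -> anti S s -> R \subset S -> w \in S ->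
  (w \in R \/ forall x, x \in S -> ~~ e w x) -> exact S R s t.
Proof.
move=> ss As RS wS Hw z hz cz.
have vD : forall G, valid S R G -> w \in G -> valid S R (G :\ w).
  move=> G /andP[GS iG] wG; apply/andP; split.
    by apply: subset_trans GS; apply: subD1set.
  rewrite setDD1 // -setUA.
  case: Hw => [wR|wI].
    by rewrite (setUidPr (_ : [set w] \subset _)) // sub1set inE wR orbT.
  apply: indepU1 => // x; rewrite !inE => /orP[/andP[_ xS]|/(subsetP RS) xS]; exact: wI.
exists (fun F => if w \in F then s w F * z (F :\ w) else 0); split.
  move=> F; case: ifP => wF; last by rewrite eqxx.
  move=> H; have /hz[vF cF] : z (F :\ w) != 0.
    by apply: contraNneq H => ->; rewrite mulr0.
  case/andP: vF => FS _; split; first by rewrite -(setD1K wF) subUset sub1set wS.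
  by rewrite -cF setDD1 // cardsU1 !inE wF.
move=> G; rewrite {1}/dd; case: ifP => vG; last by rewrite (homz0 hz) ?vG.
case: (boolP (w \in G)) => wG.
  have := cz (G :\ w); rewrite /dd vD // setDD1 // big_setU1 /=; last by rewrite !inE wG.
  rewrite setD1K // => /eqP; rewrite addr_eq0 => /eqP H.
  transitivity (- s w G * \sum_(l in S :\: G) s l (l |: (G :\ w)) * z (l |: (G :\ w))); last first.
    by rewrite -[X in _ * X]opprK -H mulNr mulrN opprK mulrA ss mul1r.
  rewrite mulr_sumr; apply: eq_bigr => l; rewrite inE => /andP[lG lS].
  have lw : l != w by apply: contraNneq lG => ->.
  rewrite !inE wG orbT setU1D1 //.
  set F := l |: G; set X := l |: (G :\ w).
  have FS : F \subset S by rewrite subUset sub1set lS; case/andP: vG.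
  have := As l w F FS; rewrite !inE eqxx /= wG orbT => /(_ isT isT lw).
  rewrite /F setU1K // setU1D1 // -/F -/X => H0.
  have -> : s l F = s l F * (s w G * s w G) by rewrite ss mulr1.
  rewrite [s l F * _]mulrA H0.
  transitivity (- (s w F * s w F) * (s l X * s w G * z X)); first by ring.
  by rewrite ss; ring.
rewrite (bigD1 w) /=; last by rewrite !inE wG wS.
rewrite !inE eqxx /= setU1K // mulrA ss mul1r big1 ?addr0 // => l /andP[_ lw].
by rewrite !inE (negbTE wG) orbF eq_sym (negbTE lw) mulr0.
Qed.


Lemma dd_supp S R s y t G : (forall F, y F != 0 -> F \subset S /\ (#|S :\: F|).+1 = t) ->
  dd S R s y G != 0 -> valid S R G /\ #|S :\: G| = t.
Proof.
move=> hy; rewrite /dd; case: ifP => vG; last by rewrite eqxx.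
case/sum_nz => l; rewrite inE => /andP[lG lS] H.
have /hy[_ <-] : y (l |: G) != 0 by apply: contraNneq H => ->; rewrite mulr0.
split=> //.
have -> : S :\: (l |: G) = (S :\: G) :\ l.
  by apply/setP=> x; rewrite !inE; case: (x == l); case: (x \in G).
by rewrite [LHS](cardsD1 l) !inE lG lS add1n.
Qed.

Lemma setDD1D1 S X w : w \in X -> (S :\ w) :\: (X :\ w) = S :\: X.
Proof.
move=> wX; apply/setP=> x; rewrite !inE.
by case: (x =P w) => [->|_]; rewrite ?wX.
Qed.

Lemma setD1D S F w : w \notin F -> (S :\ w) :\: F = S :\: (w |: F).
Proof.
move=> wF; apply/setP=> x; rewrite !inE.
by case: (x =P w) => [->|_]; rewrite ?(negbTE wF).
Qed.

Lemma ses S s t w : sgsq s -> anti S s -> w \in S -> (0 < t)%N ->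
  exact (S :\ w) set0 (fun l F => s l (w |: F)) t ->
  exact (S :\: (w |: [set x in S | e w x])) set0
        (fun l F => s l (F :|: [set x in S | e w x])) t.-1 ->
  exact S set0 s t.
Proof.
move=> ss As wS t0 E2 E1 z hz cz.
set N0 := [set x in S | e w x].
set S' := S :\: (w |: N0).
have wN0 : w \notin N0 by rewrite inE eirr andbF.
have N0S : N0 \subset S by apply/subsetP => x; rewrite inE => /andP[].
have vE : forall F, valid S set0 F = (F \subset S) && indep (S :\: F).
  by move=> F; rewrite /valid setU0.
have vE' : forall F, valid S' set0 F = (F \subset S') && indep (S' :\: F).
  by move=> F; rewrite /valid setU0.
have vE2 : forall F, valid (S :\ w) set0 F = (F \subset S :\ w) && indep ((S :\ w) :\: F).
  by move=> F; rewrite /valid setU0.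
have wS' : w \notin S' by rewrite !inE eqxx.
have S'I : forall x, x \in S' -> ~~ e w x.
  by move=> x; rewrite !inE negb_or => /andP[/andP[_ /negP H] xS]; apply/negP => ewx; apply: H; rewrite xS.
have dE : forall F, F \subset S' -> S :\: (F :|: N0) = w |: (S' :\: F).
  move=> F FS'; apply/setP=> x; rewrite !inE.
  case: (x =P w) => [->|_] /=.
    by rewrite wS eirr andbF /= (negbTE (contra (subsetP FS' w) wS')).
  by case: (x \in F); case: (x \in S); case: (e w x).
have UN0S : forall F, F \subset S' -> F :|: N0 \subset S.
  move=> F FS'; rewrite subUset N0S andbT; apply: subset_trans FS' _; exact: subsetDl.
pose z2 := fun F => if w \in F then 0 else z (w |: F).
have hz2 : homz (S :\ w) set0 t z2.
  move=> F; rewrite /z2; case: ifP => wF; first by rewrite eqxx.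
  move/hz => []; rewrite vE => /andP[FS iF] cF.
  rewrite vE2 setD1D ?wF //; split=> //; rewrite iF andbT.
  apply/subsetP => x xF; rewrite !inE (subsetP FS) ?inE ?xF ?orbT // andbT.
  by apply: contraNneq (negbT wF) => <-.
have cz2 : forall G, dd (S :\ w) set0 (fun l F => s l (w |: F)) z2 G = 0.
  move=> G; rewrite /dd; case: ifP => // vG.
  move: vG; rewrite vE2 => /andP[GS iG].
  have wG : w \notin G by apply/negP => /(subsetP GS); rewrite !inE eqxx.
  have vG' : valid S set0 (w |: G).
    rewrite vE -setD1D // iG andbT subUset sub1set wS /=.
    by apply: subset_trans GS _; apply: subD1set.
  apply: etrans (cz (w |: G)); rewrite /dd vG'.
  rewrite -setD1D //; apply: eq_bigr => l; rewrite !inE => /andP[lG /andP[lw lS]].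
  rewrite /z2 !inE eq_sym (negbTE lw) (negbTE wG) /=.
  by rewrite setUCA.
have [y2 [hy2 dy2]] := E2 z2 hz2 cz2.
pose y := fun F => if w \in F then y2 (F :\ w) else 0.
have hy : forall F, y F != 0 -> F \subset S /\ (#|S :\: F|).+1 = t.
  move=> F; rewrite /y; case: ifP => wF; last by rewrite eqxx.
  move/hy2 => [FS <-]; rewrite setDD1D1 //; split=> //.
  rewrite -(setD1K wF) subUset sub1set wS /=.
  by apply: subset_trans FS _; apply: subD1set.
have dyw : forall F, w \in F -> dd S set0 s y F = z F.
  move=> F wF; case: (boolP (valid S set0 F)) => vF; last first.
    by rewrite /dd (negbTE vF) (homz0 hz vF).
  have := dy2 (F :\ w); rewrite /z2 !inE eqxx /= setD1K // => <-.
  rewrite /dd vF.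
  have -> : valid (S :\ w) set0 (F :\ w).
    move: vF; rewrite vE vE2 setDD1D1 // => /andP[FS ->]; rewrite andbT.
    by apply/subsetP => x; rewrite !inE => /andP[-> /(subsetP FS) ->].
  rewrite setDD1D1 //; apply: eq_bigr => l; rewrite !inE => /andP[lF lS].
  have lw : l != w by apply: contraNneq lF => ->.
  rewrite /y !inE wF orbT setU1D1 //.
  by rewrite setUCA setD1K.
pose r := fun F => z F - dd S set0 s y F.
have rw : forall F, w \in F -> r F = 0 by move=> F wF; rewrite /r dyw // subrr.
have hr : homz S set0 t r.
  move=> F rF; case: (boolP (z F == 0)) => zF; last exact: hz.
  apply: (dd_supp (s := s) hy); apply: contraNneq rF => H.
  by rewrite /r H (eqP zF) subrr.
have cr : forall G, dd S set0 s r G = 0.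
  by move=> G; rewrite /r ddB cz dd2 // subrr.
pose r' := fun F => if F \subset S' then r (F :|: N0) else 0.
have hr' : homz S' set0 t.-1 r'.
  move=> F; rewrite /r'; case: ifP => FS'; last by rewrite eqxx.
  move=> H; have wF : w \notin F :|: N0 by apply/negP => /rw /eqP; rewrite (negbTE H).
  move/hr: H => []; rewrite vE dE // => /andP[_ iF] cF.
  rewrite vE' FS' /=; split.
    by apply: indepS iF; apply: subsetUr.
  have wSF : w \notin S' :\: F by rewrite inE (negbTE wS') andbF.
  by rewrite -cF cardsU1 wSF.
have cr' : forall G, dd S' set0 (fun l F => s l (F :|: N0)) r' G = 0.
  move=> G; rewrite /dd; case: ifP => // vG.
  move: vG; rewrite vE' => /andP[GS' iG].
  have vG0 : valid S set0 (G :|: N0).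
    rewrite vE UN0S //= dE //; apply: indepU1 => // x; rewrite inE => /andP[_]; exact: S'I.
  apply: etrans (cr (G :|: N0)); rewrite /dd vG0 dE // big_setU1 /=; last by rewrite inE (negbTE wS') andbF.
  rewrite rw ?mulr0 ?add0r; last by rewrite !inE eqxx.
  apply: eq_bigr => l; rewrite inE => /andP[lG lS'].
  rewrite /r' setUA; suff -> : l |: G \subset S' by [].
  by rewrite subUset sub1set lS'.
have [y' [hy' dy']] := E1 r' hr' cr'.
pose y3 := fun F => if (N0 \subset F) && (w \notin F) then y' (F :\: N0) else 0.
have hy3 : forall F, y3 F != 0 -> F \subset S /\ (#|S :\: F|).+1 = t.
  move=> F; rewrite /y3; case: ifP => [/andP[N0F wF]|]; last by rewrite eqxx.
  move/hy' => [FS' cF].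
  have FE : F = (F :\: N0) :|: N0.
    apply/setP=> x; rewrite in_setU in_setD.
    by case: (boolP (x \in N0)) => xN /=; rewrite ?orbT ?orbF ?(subsetP N0F x xN).
  rewrite FE UN0S //; split=> //.
  rewrite dE // cardsU1 inE (negbTE wS') andbF /= add1n; move: cF; rewrite -/N0 -/S' => ->.
  by rewrite prednK.
have dy3 : forall G, dd S set0 s y3 G = r G.
  move=> G; case: (boolP (valid S set0 G)) => vG; last first.
    by rewrite /dd (negbTE vG) (homz0 hr vG).
  case: (boolP (w \in G)) => wG.
    rewrite rw // /dd vG big1 // => l _.
    by rewrite /y3 !inE wG orbT andbF mulr0.
  move: (vG); rewrite vE => /andP[GS iG].
  have N0G : N0 \subset G.
    apply/subsetP => x xN0; apply: contraTT iG => xG.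
    move: (xN0); rewrite inE => /andP[xS ewx].
    apply/negP => /indepP /(_ w x); rewrite !inE wG wS xG xS => /(_ isT isT).
    by rewrite ewx.
  set G' := G :\: N0.
  have GE : G = G' :|: N0.
    apply/setP=> x; rewrite in_setU in_setD.
    by case: (boolP (x \in N0)) => xN /=; rewrite ?orbT ?orbF ?(subsetP N0G x xN).
  have G'S' : G' \subset S'.
    apply/subsetP => x; rewrite !inE => /andP[xN0 xG]; have xS := subsetP GS x xG.
    move: xN0; rewrite xS /= => xN0; rewrite negb_or xN0 andbT.
    rewrite andbT; by apply/eqP => xw; move: wG; rewrite -xw xG.
  have := dy' G'; rewrite /r' G'S' -GE => <-.
  have vG' : valid S' set0 G'.
    rewrite vE' G'S' /=; move: iG; rewrite GE dE //; apply: indepS; exact: subsetUr.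
  rewrite /dd vG' vG {1}GE dE // big_setU1 /=; last by rewrite inE (negbTE wS') andbF.
  rewrite /y3 !inE eqxx /= andbF mulr0 add0r.
  apply: eq_bigr => l; rewrite inE => /andP[lG' lS'].
  have lN0 : l \notin N0 by apply/negP => lN; move: lS'; rewrite in_setD in_setU1 lN orbT.
  have lw : l != w by apply/eqP => lw; move: lS'; rewrite lw (negbTE wS').
  rewrite -setUA -GE subsetU ?N0G ?orbT //= !inE (negbTE wG) orbF eq_sym (negbTE lw) /=.
  congr (_ * y' _); apply/setP=> x; rewrite in_setD !in_setU1 in_setD.
  by case: (x =P l) => [->|_] /=; rewrite ?lN0.
exists (fun F => y F + y3 F); split.
  move=> F H; case: (boolP (y F == 0)) => yF; last exact: hy.
  by apply: hy3; apply: contraNneq H => ->; rewrite (eqP yF) add0r.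
by move=> G; rewrite ddD dy3 /r addrC subrK.
Qed.


Lemma sgsq_w s w : sgsq s -> sgsq (fun l F => s l (w |: F)).
Proof. by move=> ss l F; apply: ss. Qed.

Lemma sgsq_N s (N : {set V}) : sgsq s -> sgsq (fun l F => s l (F :|: N)).
Proof. by move=> ss l F; apply: ss. Qed.

Lemma anti_w S s w : anti S s -> w \in S -> anti (S :\ w) (fun l F => s l (w |: F)).
Proof.
move=> As wS l m F FS lF mF lm /=.
have FS' : w |: F \subset S.
  by rewrite subUset sub1set wS /=; apply: subset_trans FS _; apply: subD1set.
have wl : l != w by move: (subsetP FS l lF); rewrite !inE => /andP[].
have wm : m != w by move: (subsetP FS m mF); rewrite !inE => /andP[].
rewrite -!setU1D1 1?eq_sym //.
by apply: As => //; rewrite !inE ?lF ?mF ?orbT.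
Qed.

Lemma anti_N S S' s (N : {set V}) : anti S s -> S' \subset S -> N \subset S -> [disjoint S' & N] ->
  anti S' (fun l F => s l (F :|: N)).
Proof.
move=> As S'S NS dS l m F FS lF mF lm /=.
have FS' : F :|: N \subset S by rewrite subUset NS andbT; apply: subset_trans FS S'S.
have lN : l \notin N by rewrite (disjointFr dS) //; apply: (subsetP FS).
have mN : m \notin N by rewrite (disjointFr dS) //; apply: (subsetP FS).
have E : forall x, x \notin N -> (F :\ x) :|: N = (F :|: N) :\ x.
  move=> x xN; apply/setP=> y; rewrite !inE.
  by case: (y =P x) => [->|_] /=; rewrite ?(negbTE xN).
rewrite !E //; apply: As => //; rewrite inE ?lF ?mF //.
Qed.

Lemma exact0 S R s t : (#|S| < t)%N -> exact S R s t.
Proof.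
move=> St z hz cz; exists (fun _ => 0); split => [F|G]; first by rewrite eqxx.
rewrite dd0; apply/esym/eqP; apply: contraLR St => /hz[_ <-]; rewrite -leqNgt.
by rewrite subset_leq_card // subsetDl.
Qed.

Lemma subset_card (X : {set V}) c : (c <= #|X|)%N -> exists2 Y : {set V}, Y \subset X & #|Y| = c.
Proof.
elim: c => [|c IH] H; first by exists (set0 : {set V}); rewrite ?sub0set ?cards0.
have [Y YX cY] := IH (ltnW H).
have : (0 < #|X :\: Y|)%N by rewrite cardsDS // cY subn_gt0.
rewrite card_gt0 => /set0Pn [x]; rewrite inE => /andP[xY xX].
exists (x |: Y); first by rewrite subUset sub1set xX.
by rewrite cardsU1 xY cY.
Qed.

Lemma lemA (N : nat) : forall (A S : {set V}) (m : nat) s, (#|A| <= N)%N -> A \subset S ->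
  (forall x y, x \in S -> y \in S -> e x y -> (x \in A) || (y \in A)) ->
  (forall X, X \subset A -> indep X -> (#|X| <= m)%N) ->
  sgsq s -> anti S s -> forall t, (m < t)%N -> exact S set0 s t.
Proof.
elim: N => [|N IH] A S m s cA AS eA aA ss As t mt.
  have A0 : A = set0 by apply/eqP; rewrite -cards_eq0 -leqn0.
  case: (set_0Vmem S) => [->|[w wS]]; first by apply: exact0; rewrite cards0 (leq_ltn_trans _ mt).
  apply: (cone (w := w) ss As (sub0set _) wS); right => x xS; apply/negP => ewx.
  by move: (eA w x wS xS ewx); rewrite A0 !inE.
case: (set_0Vmem A) => [A0|[a ainA]].
  by apply: (IH A S m s) => //; rewrite A0 cards0.
have aS := subsetP AS a ainA.
have m1 : (1 <= m)%N.
  rewrite -(cards1 a); apply: aA; first by rewrite sub1set.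
  by apply/indepP => x y; rewrite !inE => /eqP -> /eqP ->; rewrite eirr.
have t0 : (0 < t)%N by apply: leq_trans mt.
apply: (ses ss As aS t0).
  apply: (IH (A :\ a) _ m) => //.
  - by rewrite -ltnS (leq_trans _ cA) // [in X in (_ < X)%N](cardsD1 a) ainA.
  - by apply/subsetP => x; rewrite !inE => /andP[-> /(subsetP AS)].
  - move=> x y; rewrite !inE => /andP[xa xS] /andP[ya yS] exy.
    by move: (eA x y xS yS exy); rewrite xa ya.
  - by move=> X XA; apply: aA; apply: subset_trans XA _; apply: subD1set.
  - exact: anti_w.
set N0 := [set x in S | e a x].
set S' := S :\: (a |: N0).
have S'S : S' \subset S by apply: subsetDl.
have S'I : forall x, x \in S' -> ~~ e a x.
  move=> x; rewrite !inE negb_or => /andP[/andP[_ H] xS]; move: H; rewrite xS //.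
apply: (IH (A :&: S') _ m.-1) => //.
- rewrite -ltnS (leq_trans _ cA) //; apply: proper_card; apply/properP; split.
    exact: subsetIl.
  by exists a => //; rewrite in_setI in_setD in_setU1 eqxx andbF.
- exact: subsetIr.
- move=> x y xS' yS' exy; rewrite !in_setI xS' yS' !andbT.
  exact: eA (subsetP S'S x xS') (subsetP S'S y yS') exy.
- move=> X XA iX; rewrite -ltnS prednK //.
  have XS' : X \subset S' by apply: subset_trans XA (subsetIr _ _).
  have aX : a \notin X by apply/negP => /(subsetP XS'); rewrite !inE eqxx.
  have -> : (#|X|.+1) = #|a |: X| by rewrite cardsU1 aX.
  apply: aA.
    by rewrite subUset sub1set ainA (subset_trans XA (subsetIl _ _)).
  by apply: indepU1 => // x /(subsetP XS'); apply: S'I.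
- apply: (anti_N As S'S); first by apply/subsetP => x; rewrite inE => /andP[].
  by rewrite -setI_eq0; apply/eqP/setP => x; rewrite !inE; case: (x \in S); case: (e a x); rewrite ?orbT ?andbF.
- by rewrite -ltnS prednK // prednK.
Qed.


Lemma lemM n : (0 < n)%N -> gap_free e -> claw_free e n ->
  forall (N : nat) S s, (#|S| <= N)%N -> sgsq s -> anti S s ->
  forall t, (n <= t)%N -> exact S set0 s t.
Proof.
move=> n0 gf cf; elim=> [|N IH] S s cS ss As t nt.
  by apply: exact0; move: cS; rewrite leqn0 => /eqP ->; apply: leq_trans nt.
case: (boolP [exists w in S, [forall x in S, ~~ e w x]]).
  case/exists_inP => w wS /forall_inP H.
  by apply: (cone (w := w) ss As (sub0set _) wS); right.
rewrite negb_exists_in => /forall_inP noiso.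
case: (set_0Vmem S) => [->|[w wS]]; first by apply: exact0; rewrite cards0 (leq_trans n0 nt).
have := noiso w wS; rewrite negb_forall_in => /exists_inP [u uS /negPn ewu].
have n2 : (1 < n)%N.
  rewrite ltn_neqAle n0 andbT; apply/negP => /eqP n1; apply: cf.
  exists u, [set w]; split; first by rewrite cards1.
    by move=> x; rewrite inE => /eqP ->; rewrite eS.
  by move=> x y; rewrite !inE => /eqP -> /eqP ->; rewrite eirr.
have t0 : (0 < t)%N by apply: leq_trans nt.
apply: (ses ss As wS t0).
  apply: (IH (S :\ w)) => //.
    by rewrite -ltnS (leq_trans _ cS) // [in X in (_ < X)%N](cardsD1 w) wS.
  exact: anti_w.
set N0 := [set x in S | e w x].
set S' := S :\: (w |: N0).
have S'S : S' \subset S by apply: subsetDl.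
have S'I : forall x, x \in S' -> ~~ e w x.
  move=> x; rewrite !inE negb_or => /andP[/andP[_ H] xS]; move: H; rewrite xS //.
have wS' : w \notin S' by rewrite !inE eqxx.
set A := S' :&: [set x | e u x].
apply: (lemA (N := #|A|) (A := A) (m := n.-2)) => //.
- exact: subsetIl.
- move=> x y xS' yS' exy; rewrite !in_setI xS' yS' !inE /=.
  have xw : w != x by apply: contraNneq wS' => ->.
  have yw : w != y by apply: contraNneq wS' => ->.
  have ux : u != x by apply: contraTneq ewu => ->; apply: S'I.
  have uy : u != y by apply: contraTneq ewu => ->; apply: S'I.
  have := gf w u x y ewu exy xw yw ux uy.
  by rewrite (negbTE (S'I x xS')) (negbTE (S'I y yS')).
- move=> X XA iX; rewrite leqNgt; apply/negP => H.
  have [Y YX cY] : exists2 Y : {set V}, Y \subset X & #|Y| = n.-1.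
    by apply: subset_card; move: H n2; clear; lia.
  have YA := subset_trans YX XA.
  have YS' : Y \subset S' by apply: subset_trans YA (subsetIl _ _).
  have wY : w \notin Y by apply/negP => /(subsetP YS'); rewrite (negbTE wS').
  apply: cf; exists u, (w |: Y); split.
  + by rewrite cardsU1 wY cY add1n prednK // ltnW.
  + move=> x xW; case/setU1P: xW => [->|xY]; first by rewrite eS.
    by move: (subsetP YA x xY); rewrite !inE => /andP[_].
  + move=> x y xW yW; case/setU1P: xW => [->|xY]; case/setU1P: yW => [->|yY].
    * by rewrite eirr.
    * by apply: S'I; apply: (subsetP YS').
    * by rewrite eS; apply: S'I; apply: (subsetP YS').
    * by move/indepP: (indepS YX iX); apply.
- apply: (anti_N As S'S); first by apply/subsetP => x; rewrite inE => /andP[].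
  by rewrite -setI_eq0; apply/eqP/setP => x; rewrite !inE; case: (x \in S); case: (e w x); rewrite ?orbT ?andbF.
- by move: n2 nt; clear; lia.
Qed.

End Comb.
Section Trans.
Variables (k : fieldType) (V : finType) (e : rel V).
Hypotheses (eS : symmetric e) (eirr : irreflexive e).
Local Open Scope ring_scope.
Implicit Types (S R F G X : {set V}) (l m : V).

Definition sg l F : k := (-1) ^+ #|[set v in F | (enum_rank v < enum_rank l)%N]|.

Lemma sg_sq : sgsq sg.
Proof. by move=> l F; rewrite /sg -expr2 sqrr_sign. Qed.

Lemma cntD1 F l m : l \in F -> l != m ->
  #|[set v in F | (enum_rank v < enum_rank m)%N]| =
  ((enum_rank l < enum_rank m)%N + #|[set v in F :\ l | (enum_rank v < enum_rank m)%N]|)%N.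
Proof.
move=> lF lm; rewrite [LHS](cardsD1 l) !inE lF /=; congr (_ + _)%N.
by apply: eq_card => x; rewrite !inE; case: (x == l).
Qed.

Lemma sg_anti S : anti S sg.
Proof.
move=> l m F _ lF mF lm; rewrite /sg.
have ml : m != l by rewrite eq_sym.
rewrite (cntD1 lF lm) (cntD1 mF ml) !exprD.
set a := (-1) ^+ #|_| ; set b := (-1) ^+ #|_|.
case: (ltngtP (enum_rank l) (enum_rank m)) => H /=.
- by rewrite expr0 expr1; ring.
- by rewrite expr0 expr1; ring.
- by move/val_inj/enum_rank_inj: H => H; rewrite H eqxx in lm.
Qed.


Variable j : nat.
Local Notation P := ({set V} * {ffun V -> 'I_j.+1})%type.

Definition mdf (p : P) : {ffun V -> 'I_j.+2} := [ffun v => inord ((v \in p.1) + p.2 v)].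

Lemma mdfE (p : P) v : (mdf p v : nat) = ((v \in p.1) + p.2 v)%N.
Proof.
rewrite ffunE inordK // ltnS; have := ltn_ord (p.2 v).
by case: (v \in p.1) => /=; rewrite ?add1n ?add0n // => /ltnW.
Qed.

Lemma kcoef_nz i (p q : P) : kcoef k e i p q != 0 ->
  [/\ kbasis e i p, std_mon e q.2 & exists l, [/\ l \in p.1, q.1 = p.1 :\ l,
      (q.2 l : nat) = (p.2 l).+1 & forall v, v != l -> (q.2 v : nat) = p.2 v]].
Proof.
rewrite /kcoef; case: ifP => [/andP[kb st]|]; last by rewrite eqxx.
case: pickP => [l|]; last by rewrite eqxx.
move=> /andP[lF /andP[/andP[/eqP E1 /eqP E2] /forallP E3]] _; split=> //.
exists l; split=> // v vl; apply/eqP; move: (E3 v); by rewrite vl.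
Qed.

Lemma kcoef_md i (p q : P) : kcoef k e i p q != 0 -> mdf p = mdf q.
Proof.
case/kcoef_nz => _ _ [l [lF E1 E2 E3]].
apply/ffunP => v; apply: val_inj; rewrite /= !mdfE E1 !inE.
case: (v =P l) => [->|/eqP vl] /=; first by rewrite lF E2 add1n.
by rewrite E3.
Qed.


Section Block.
Variable a : {ffun V -> 'I_j.+2}.
Hypothesis ha : forall v, (a v <= j)%N.
Hypothesis hs : (\sum_v (a v : nat))%N = j.

Definition sig := [set v | (0 < a v)%N].
Definition Rr := [set v | (1 < a v)%N].

Lemma RrS : Rr \subset sig.
Proof. by apply/subsetP => v; rewrite !inE => /ltnW. Qed.

Definition pr F : P := (F, [ffun v => inord ((a v : nat) - (v \in F))]).

Lemma prE F v : ((pr F).2 v : nat) = ((a v : nat) - (v \in F))%N.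
Proof. by rewrite ffunE inordK // ltnS (leq_trans (leq_subr _ _) (ha v)). Qed.

Lemma pr_md (p : P) : mdf p = a -> p = pr p.1.
Proof.
move=> pa; case: p pa => F u /= pa; congr pair; apply/ffunP => v; apply: val_inj.
by rewrite /= prE /= -pa mdfE /= addKn.
Qed.

Lemma md_sub (p : P) : mdf p = a -> p.1 \subset sig.
Proof.
move=> pa; apply/subsetP => v vF; rewrite inE -pa mdfE vF //.
Qed.

Lemma md_pr F : F \subset sig -> mdf (pr F) = a.
Proof.
move=> FS; apply/ffunP => v; apply: val_inj; rewrite /= mdfE prE /=.
case vF: (v \in F); last by rewrite subn0.
by rewrite subnKC //; move: (subsetP FS v vF); rewrite inE.
Qed.

Lemma pos_pr F v : F \subset sig ->
  (0 < (pr F).2 v)%N = (v \in (sig :\: F) :|: Rr).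
Proof.
move=> FS; rewrite prE !inE; case vF: (v \in F) => /=.
  by rewrite subn_gt0.
rewrite subn0 orbC; case: (a v : nat) => [|[|]] //.
Qed.

Lemma std_pr F : F \subset sig -> std_mon e (pr F).2 = indep e ((sig :\: F) :|: Rr).
Proof.
move=> FS; apply/idP/idP.
  move/forallP => H; apply/indepP => x y xX yX; move/forallP: (H x) => /(_ y).
  by rewrite !pos_pr // xX yX !andbT.
move/indepP => H; apply/forallP => x; apply/forallP => y.
rewrite !pos_pr //; case xX: (x \in _); case yX: (y \in _); rewrite ?andbF //=.
by rewrite andbT; apply: H.
Qed.

Lemma kbasis_pr i F : F \subset sig -> kbasis e i (pr F) = (#|F| == i) && valid e sig Rr F.
Proof.
move=> FS; rewrite /kbasis /valid /= FS std_pr //; congr (_ && _).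
suff -> : (#|F| + mdeg (pr F).2)%N = j by rewrite eqxx.
apply: etrans hs; rewrite /mdeg -sum1_card big_mkcond /= -big_split /=.
apply: eq_bigr => v _; rewrite prE; case vF: (v \in F) => /=; last by rewrite subn0.
by rewrite subnKC //; move: (subsetP FS v vF); rewrite inE.
Qed.

Lemma kcoef_pr i l G : l \in sig -> l \notin G -> G \subset sig ->
  kcoef k e i (pr (l |: G)) (pr G) =
  if kbasis e i (pr (l |: G)) && std_mon e (pr G).2 then sg l (l |: G) else 0.
Proof.
move=> lS lG GS; rewrite /kcoef; case: ifP => // _.
case: pickP => [l' /andP[l'F /andP[/andP[/eqP E1 _] _]]|H] /=.
  suff -> : l' = l by [].
  apply/eqP; apply: contraNT lG => l'l.
  have l'G : l' \in G by move: l'F; rewrite !inE (negbTE l'l).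
  by move: E1 l'G => /= ->; rewrite !inE eqxx.
exfalso; move: (H l) => /negbT /negP; apply.
rewrite /= !inE eqxx /= setU1K // eqxx /=; apply/andP; split.
  rewrite !prE !inE eqxx /= (negbTE lG) subn0 subn1 prednK //.
  by move: lS; rewrite inE.
apply/forallP => v; apply/implyP => vl.
by rewrite !ffunE !inE (negbTE vl).
Qed.


Lemma sum_red i (f : P -> k) G : G \subset sig -> (forall p, f p != 0 -> mdf p = a) ->
  \sum_p f p * kcoef k e i p (pr G) =
  \sum_(l in sig :\: G) f (pr (l |: G)) *
     (if kbasis e i (pr (l |: G)) && std_mon e (pr G).2 then sg l (l |: G) else 0).
Proof.
move=> GS hf.
rewrite (bigID (mem [set pr (l |: G) | l in sig :\: G])) /=.
rewrite [X in _ + X]big1 ?addr0; last first.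
  move=> p pI; case: (boolP (f p == 0)) => [/eqP->|fp]; first by rewrite mul0r.
  case: (boolP (kcoef k e i p (pr G) == 0)) => [/eqP->|kp]; first by rewrite mulr0.
  exfalso; move/negP: pI; apply.
  have pa := hf p fp.
  case/kcoef_nz: kp => _ _ [l [lF E1 _ _]].
  move: E1 => /= E1.
  rewrite (pr_md pa); apply/imsetP; exists l.
    by rewrite in_setD E1 in_setD1 eqxx /=; exact: (subsetP (md_sub pa)).
  by rewrite E1 setD1K.
rewrite big_imset /=; last first.
  move=> l l' lS l'S /(congr1 fst) /= E.
  move: (setU11 l G); rewrite E !inE => /orP[/eqP //|lG].
  by move: lS; rewrite inE lG.
by apply: eq_bigr => l; rewrite inE => /andP[lG lS]; rewrite kcoef_pr.
Qed.

Lemma block i (X : P -> k) :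
  exact e sig Rr sg (#|sig| - i) ->
  (forall p, X p != 0 -> kbasis e i p && (mdf p == a)) ->
  (forall q, \sum_p X p * kcoef k e i p q = 0) ->
  exists Y : P -> k, forall q, \sum_p Y p * kcoef k e i.+1 p q = X q.
Proof.
move=> HE hX cX.
pose z F := if F \subset sig then X (pr F) else 0.
have hXa : forall p, X p != 0 -> mdf p = a by move=> p /hX /andP[_ /eqP].
have hz : homz e sig Rr (#|sig| - i) z.
  move=> F; rewrite /z; case: ifP => FS; last by rewrite eqxx.
  move/hX => /andP[]; rewrite kbasis_pr // => /andP[/eqP cF vF] _; split=> //.
  by rewrite cardsDS // cF.
have cz : forall G, dd e sig Rr sg z G = 0.
  move=> G; rewrite /dd; case: ifP => // vG.
  have GS : G \subset sig by case/andP: vG.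
  have stG : std_mon e (pr G).2 by rewrite std_pr //; case/andP: vG.
  transitivity (\sum_p X p * kcoef k e i p (pr G)); last exact: cX.
  rewrite (sum_red _ GS hXa); apply: eq_bigr => l; rewrite inE => /andP[lG lS].
  have lGS : l |: G \subset sig by rewrite subUset sub1set lS GS.
  rewrite stG andbT /z lGS.
  case: ifP => kb; first by rewrite mulrC.
  have -> : X (pr (l |: G)) = 0.
    by apply/eqP; apply: contraFT kb => /hX /andP[H _]; exact: H.
  by rewrite !mulr0.
have [y [hy dy]] := HE z hz cz.
exists (fun p => if mdf p == a then y p.1 else 0) => q.
have hYa : forall p, (if mdf p == a then y p.1 else 0) != 0 -> mdf p = a.
  by move=> p; case: (mdf p =P a) => // _; rewrite eqxx.
case: (boolP (mdf q == a)) => [/eqP qa|qa].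
  rewrite (pr_md qa); set G := q.1.
  have GS : G \subset sig := md_sub qa.
  rewrite (sum_red _ GS hYa).
  have -> : X (pr G) = z G by rewrite /z GS.
  rewrite -dy /dd.
  case: ifP => vG.
    apply: eq_bigr => l; rewrite inE => /andP[lG lS].
    have lGS : l |: G \subset sig by rewrite subUset sub1set lS GS.
    rewrite md_pr // eqxx /=.
    have stG : std_mon e (pr G).2 by rewrite std_pr //; case/andP: vG.
    rewrite stG andbT.
    case: (boolP (y (l |: G) == 0)) => [/eqP->|yl]; first by rewrite !mul0r mulr0.
    have [_ cl] := hy _ yl.
    rewrite kbasis_pr // valid_up // andbT.
    have -> : #|l |: G| == i.+1.
      apply/eqP; move: cl; rewrite cardsDS //; have := subset_leq_card lGS; lia.
    by rewrite mulrC.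
  rewrite big1 // => l _.
  have -> : std_mon e (pr G).2 = false by rewrite std_pr //; move: vG; rewrite /valid GS.
  by rewrite andbF mulr0.
rewrite big1; last first.
  move=> p _; case: eqP => [pa|]; last by rewrite mul0r.
  have -> : kcoef k e i.+1 p q = 0.
    by apply/eqP; apply: contraNT qa => /kcoef_md <-; rewrite pa.
  by rewrite mulr0.
by apply/esym/eqP; apply: contraNT qa => /hX /andP[_ ->].
Qed.

End Block.

Lemma transl i
  (HE : forall a : {ffun V -> 'I_j.+2}, (forall v, (a v <= j)%N) ->
     (\sum_v (a v : nat))%N = j -> exact e (sig a) (Rr a) sg (#|sig a| - i))
  (X : P -> k) : (forall p, X p != 0 -> kbasis e i p) ->
  (forall q, \sum_p X p * kcoef k e i p q = 0) ->
  exists Y : P -> k, forall q, \sum_p Y p * kcoef k e i.+1 p q = X q.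
Proof.
move=> hX cX.
have blk : forall a : {ffun V -> 'I_j.+2}, exists Y : P -> k, forall q,
   \sum_p Y p * kcoef k e i.+1 p q = (if mdf q == a then X q else 0).
  move=> a.
  case: (boolP [exists p, kbasis e i p && (mdf p == a)]) => [/existsP[p0 /andP[kb /eqP pa]]|none].
    have hs : (\sum_v (a v : nat))%N = j.
      move: kb; rewrite /kbasis => /and3P[_ /eqP E _].
      apply: etrans E; rewrite /mdeg -sum1_card [X in (X + _)%N]big_mkcond /= -big_split /=; apply: eq_bigr => v _.
      by rewrite -pa mdfE.
    have ha : forall v, (a v <= j)%N.
      move=> v; have H : (a v <= \sum_v0 (a v0 : nat))%N by rewrite (bigD1 v) //= leq_addr.
      by rewrite hs in H.
    apply: (block ha hs (HE a ha hs)).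
      move=> p; case: ifP => [pa' /hX -> //|_]; by rewrite eqxx.
    move=> q; case: (boolP (mdf q == a)) => qa.
      transitivity (\sum_p X p * kcoef k e i p q); last exact: cX.
      apply: eq_bigr => p _; case: (mdf p =P a) => // pa'.
      case: (boolP (kcoef k e i p q == 0)) => [/eqP->|/kcoef_md pq]; first by rewrite !mulr0.
      by case: pa'; rewrite pq; apply/eqP.
    apply: big1 => p _; case: (mdf p =P a) => [pa'|]; last by rewrite mul0r.
    case: (boolP (kcoef k e i p q == 0)) => [/eqP->|/kcoef_md pq]; first by rewrite !mulr0.
    by move: qa; rewrite -pq pa' eqxx.
  exists (fun _ => 0) => q; rewrite big1 => [|p _]; last by rewrite mul0r.
  case: ifP => // qa; apply/esym/eqP; apply: contraNT none => Xq.
  by apply/existsP; exists q; rewrite qa hX.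
have gen : forall s : seq {ffun V -> 'I_j.+2}, exists Y : P -> k, forall q,
   \sum_p Y p * kcoef k e i.+1 p q = \sum_(a <- s) (if mdf q == a then X q else 0).
  elim=> [|a s [Y1 hY1]].
    by exists (fun _ => 0) => q; rewrite big_nil big1 // => p _; rewrite mul0r.
  have [Y2 hY2] := blk a.
  exists (fun p => Y2 p + Y1 p) => q; rewrite big_cons -hY1 -hY2 -big_split /=.
  by apply: eq_bigr => p _; rewrite mulrDl.
have [Y hY] := gen (enum {: {ffun V -> 'I_j.+2}}).
exists Y => q; rewrite hY big_enum /= (bigD1 (mdf q)) //= eqxx big1 ?addr0 // => a.
by rewrite eq_sym => /negbTE ->.
Qed.


Lemma rank_step i :
  (forall x : 'rV[k]_#|{: P}|, (forall c, x 0 c != 0 -> kbasis e i (enum_val c)) ->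
     x *m kmx k e j i = 0 -> (x <= kmx k e j i.+1)%MS) ->
  betti_quot k e i j = 0%N.
Proof.
move=> Hx.
set A := [pred p : P | kbasis e i p].
set M := kmx k e j i; set B := kmx k e j i.+1.
pose S : 'M[k]_(#|A|, #|{: P}|) := \matrix_(r, c) ((enum_val r == enum_val c :> P)%:R).
have SS : S *m S^T = 1%:M.
  apply/matrixP => r r'; rewrite !mxE.
  rewrite (eq_bigr (fun c => ((enum_val c == enum_val r) && (enum_val c == enum_val r' :> P))%:R)); last first.
    by move=> c _; rewrite !mxE -natrM mulnb ![enum_val c == _]eq_sym.
  rewrite -(big_enum_val (A := {: P}) (fun p => ((p == enum_val r) && (p == enum_val r'))%:R)).
  rewrite (bigD1 (enum_val r)) //= eqxx /= big1 ?addr0; last first.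
    by move=> p /negbTE ->.
  by rewrite (inj_eq enum_val_inj) eq_sym.
have rS : \rank S = #|A|.
  apply/eqP; rewrite eqn_leq rank_leq_row /=.
  by rewrite -{1}(mxrank1 k #|A|) -SS mxrankM_maxl.
have sub : (S :&: kermx M <= B)%MS.
  apply/row_subP => r; set x := row r _.
  have : (x <= S :&: kermx M)%MS by apply: row_sub.
  rewrite sub_capmx => /andP[/submxP[y xy] /sub_kermxP xM].
  apply: Hx => // c xc.
  have : \sum_r0 y 0 r0 * S r0 c != 0 by move: xc; rewrite xy mxE.
  move=> Hs; have [r0] : exists r0, y 0 r0 * S r0 c != 0.
    apply/existsP; apply: contraNT Hs; rewrite negb_exists => /forallP H.
    by rewrite big1 // => r0 _; apply/eqP; move: (H r0); rewrite negbK.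
  rewrite mxE; case: (enum_val r0 =P enum_val c) => [E _|_]; last by rewrite mulr0 eqxx.
  by rewrite -E; have := enum_valP r0.
have := mxrank_mul_ker S M; rewrite rS => H.
have H1 := mxrankM_maxr S M; have H2 := mxrankS sub.
rewrite /betti_quot -/A -/M -/B; lia.
Qed.

End Trans.

Section Final.
Local Open Scope ring_scope.
Lemma main_aux (k : fieldType) (V : finType) (e : rel V) (n : nat) :
  (0 < n)%N -> symmetric e -> irreflexive e ->
  gap_free e -> claw_free e n ->
  reg_edge_ideal_le k e n.
Proof.
move=> n0 eS eI gf cf i j i0 b.
rewrite leqNgt; apply/negP => H; apply: b.
apply: rank_step => x hx cx.
pose X := fun p : ({set V} * {ffun V -> 'I_j.+1})%type => x 0 (enum_rank p).
have HE : forall a : {ffun V -> 'I_j.+2}, (forall v, (a v <= j)%N) ->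
     (\sum_v (a v : nat))%N = j -> exact e (sig a) (Rr a) (@sg k V) (#|sig a| - i).
  move=> a ha hs.
  case: (set_0Vmem (Rr a)) => [R0|[w wR]]; last first.
    apply: (cone eS eI (w := w)) => //.
    - exact: sg_sq.
    - exact: sg_anti.
    - exact: RrS.
    - exact: (subsetP (RrS a)).
    - by left.
  rewrite R0.
  have cs : #|sig a| = j.
    transitivity (\sum_v (a v : nat))%N; last exact: hs.
    rewrite -sum1_card big_mkcond /=; apply: eq_bigr => v _.
    have : v \notin Rr a by rewrite R0 inE.
    by rewrite !inE -leqNgt; case: (a v : nat) => [|[|]].
  apply: (lemM eS eI n0 gf cf (leqnn #|sig a|)).
  - exact: sg_sq.
  - exact: sg_anti.
  - rewrite cs; lia.
have hX : forall p, X p != 0 -> kbasis e i p.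
  by move=> p /hx; rewrite enum_rankK.
have sumE : forall F : ({set V} * {ffun V -> 'I_j.+1})%type -> k,
    \sum_p F p = \sum_(r < #|{: ({set V} * {ffun V -> 'I_j.+1})%type}|)
        F (enum_val (A := {: ({set V} * {ffun V -> 'I_j.+1})%type}) r).
  move=> F; rewrite -(big_enum_val (A := {: ({set V} * {ffun V -> 'I_j.+1})%type})).
  by apply: eq_bigl => p; rewrite inE.
have cX : forall q, \sum_p X p * kcoef k e i p q = 0.
  move=> q; transitivity ((x *m kmx k e j i) 0 (enum_rank q)); last by rewrite cx mxE.
  rewrite mxE sumE; apply: eq_bigr => r _; rewrite !mxE enum_rankK /X enum_valK //.
have [Y hY] := transl HE hX cX.
apply/submxP; exists (\row_r Y (enum_val r)); apply/rowP => c; rewrite !mxE.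
transitivity (X (enum_val c)); first by rewrite /X enum_valK.
rewrite -hY sumE; apply: eq_bigr => r _; rewrite !mxE //.
Qed.

End Final.

Theorem theorem3p5 (k : fieldType) (V : finType) (e : rel V) (n : nat) :
  (0 < n)%N -> symmetric e -> irreflexive e ->
  gap_free e -> claw_free e n ->
  reg_edge_ideal_le k e n.
Proof. exact: main_aux. Qed.
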